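(* Let $n\ge1$ and let $\mathcal C$ be an EACP over $\mathbb R$ with natural basis $\{h_1,\dots,h_n,r\}$ and structural constants $a_{ij},b_i\in\mathbb R$; identify $\sum_i x_ih_i+ur$ with $(x_1,\dots,x_n,u)$. For $u\in\mathbb R$ let $T_u=(t_{ij})_{i,j=1}^n$ with $t_{ij}=ua_{ji}$ for $i\neq j$ and $t_{ii}=ua_{ii}-1$, and let ${\bf b}(x)=\sum_{i=1}^n b_ix_i$ for $x=(x_1,\dots,x_n)$. Then the set of idempotent elements $\{y\in\mathcal C: y^2=y\}$ equals $$\{0\}\cup\{(x_1^*,\dots,x_n^*,u_* ): u_*\neq0,\ \det(T_{u_*})=0,\ T_{u_*}x^*=0,\ {\bf b}(x^* )=1\},$$ where $x^*=(x_1^*,\dots,x_n^* )$ is viewed as a column vector.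
   Context: An EACP over a field $K$ (characteristic $\neq 2$) is a $K$-algebra $\mathcal C$ with a basis $\{h_1,\dots,h_n,r\}$ (called a natural basis) whose multiplication is determined by bilinearity from $$h_ir=rh_i=\tfrac12\Big(\sum_{j=1}^n a_{ij}h_j+b_ir\Big),\qquad h_ih_j=0\ (i,j=1,\dots,n),\qquad rr=0,$$ for some constants $a_{ij},b_i\in K$. *)

(* Defs.v *)
From mathcomp Require Import all_boot all_order all_algebra.
From mathcomp Require Import reals.
Set Implicit Arguments. Unset Strict Implicit. Unset Printing Implicit Defensive.
Import GRing.Theory Num.Theory.
Local Open Scope ring_scope.

(* An element sum_i x_i h_i + u r of the EACP is identified with the pair
   (x, u) where x : 'cV[R]_n holds the coordinates x_1..x_n. *)
Notation eacp_elt R n := ('cV[R]_n * R^o)%type.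

Definition basis_h (R : realType) (n : nat) (i : 'I_n) : eacp_elt R n :=
  (delta_mx i 0, 0).
Definition basis_r (R : realType) (n : nat) : eacp_elt R n := (0, 1).

(* h_i r = r h_i = 1/2 (sum_j a_ij h_j + b_i r). *)
Definition hr (R : realType) (n : nat) (a : 'M[R]_n) (b : 'I_n -> R)
    (i : 'I_n) : eacp_elt R n :=
  (2^-1 : R) *: (\sum_j a i j *: basis_h R j + b i *: basis_r R n).

(* Multiplication of the EACP with structure constants a, b, obtained by
   bilinear extension of the multiplication table of the natural basis:
   h_i h_j = 0, r r = 0, h_i r = r h_i = hr i. *)
Definition eacp_mul (R : realType) (n : nat) (a : 'M[R]_n) (b : 'I_n -> R)
    (y z : eacp_elt R n) : eacp_elt R n :=
  \sum_i \sum_j (y.1 i 0 * z.1 j 0) *: (0 : eacp_elt R n)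
  + \sum_i (y.1 i 0 * z.2) *: hr a b i
  + \sum_i (y.2 * z.1 i 0) *: hr a b i
  + (y.2 * z.2) *: (0 : eacp_elt R n).

Definition Tmat (R : realType) (n : nat) (a : 'M[R]_n) (u : R) : 'M[R]_n :=
  \matrix_(i, j) (if i == j then u * a j i - 1 else u * a j i).

Definition bfun (R : realType) (n : nat) (b : 'I_n -> R) (x : 'cV[R]_n) : R :=
  \sum_i b i * x i 0.

(* Main.v *)
Require Import Defs.
From mathcomp Require Import all_boot all_order all_algebra.
From mathcomp Require Import reals.
From mathcomp Require Import ring.
Import GRing.Theory Num.Theory.
Local Open Scope ring_scope.

Section S.
Variables (R : realType) (n : nat).
Lemma fst_sum (I : finType) (F : I -> eacp_elt R n) :
  (\sum_i F i).1 = \sum_i (F i).1.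
Proof. exact: (big_morph fst (fun _ _ => erefl) (erefl _)). Qed.
Lemma snd_sum (I : finType) (F : I -> eacp_elt R n) :
  (\sum_i F i).2 = \sum_i (F i).2.
Proof. exact: (big_morph snd (fun _ _ => erefl) (erefl _)). Qed.
Lemma fstD (p q : eacp_elt R n) : (p + q).1 = p.1 + q.1. Proof. by []. Qed.
Lemma sndD (p q : eacp_elt R n) : (p + q).2 = p.2 + q.2. Proof. by []. Qed.
Lemma fstZ c (p : eacp_elt R n) : (c *: p).1 = c *: p.1. Proof. by []. Qed.
Lemma sndZ c (p : eacp_elt R n) : (c *: p).2 = c * p.2. Proof. by []. Qed.
End S.
Lemma sndD2 (V W : nmodType) (p q : V * W) : (p + q).2 = p.2 + q.2. Proof. by []. Qed.
Lemma snd_sum2 (V W : nmodType) (I : finType) (F : I -> V * W) :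
  (\sum_i F i).2 = \sum_i (F i).2.
Proof. exact: (big_morph snd (fun _ _ => erefl) (erefl _)). Qed.

Lemma mulE (R : realType) n (a : 'M[R]_n) b (x : 'cV[R]_n) (u : R) :
  eacp_mul a b (x, u) (x, u) = (u *: (a^T *m x), u * bfun b x).
Proof.
have h2 : (2^-1 : R) + 2^-1 = 1 by field.
rewrite /eacp_mul /=; congr pair.
- rewrite !fstD !fst_sum /=.
  rewrite [X in X + _ + _ + _]big1 ?add0r; last first.
    by move=> i _; rewrite fst_sum big1 // => j _; rewrite scaler0.
  rewrite scaler0 addr0.
  apply/matrixP => k l; rewrite !mxE !summxE.
  rewrite -big_split /= mulr_sumr; apply: eq_bigr => i _.
  rewrite !mxE fst_sum /= summxE (bigD1 k) //= big1 /=; last first.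
    by move=> j /negPf hj; rewrite !mxE (ord1 l) /= eq_sym hj /= mulr0.
  rewrite !mxE (ord1 l) !eqxx /=.
  by field.
- rewrite !sndD2 !snd_sum2 /=.
  rewrite [X in X + _ + _ + _]big1 ?add0r; last first.
    by move=> i _; rewrite snd_sum2 big1 // => j _; rewrite scaler0.
  rewrite scaler0 addr0 /bfun mulr_sumr -big_split /=; apply: eq_bigr => i _.
  rewrite snd_sum2 big1 /=; last by move=> j _; rewrite scaler0.
  rewrite /GRing.scale /= /GRing.scale /=.
  by field.
Qed.

Lemma TmatE (R : realType) n (a : 'M[R]_n) (u : R) (x : 'cV[R]_n) :
  Tmat a u *m x = u *: (a^T *m x) - x.
Proof.
have -> : Tmat a u = u *: a^T - 1%:M.
  apply/matrixP => i j; rewrite !mxE; case: eqP => _ /=; by rewrite ?mulr1n ?mulr0n ?subr0.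
by rewrite mulmxBl -scalemxAl mul1mx.
Qed.

Theorem mainTheorem9 (R : realType) (n : nat) (hn : (1 <= n)%N)
    (a : 'M[R]_n) (b : 'I_n -> R) :
  [pred y : eacp_elt R n | eacp_mul a b y y == y] =i
  [pred y : eacp_elt R n |
     (y == 0) ||
     [&& y.2 != 0, \det (Tmat a y.2) == 0,
         Tmat a y.2 *m y.1 == 0 & bfun b y.1 == 1]].
Proof.
move=> [x u]; rewrite !inE mulE /= TmatE subr_eq0.
have b0 : bfun b 0 = 0 by rewrite /bfun big1 // => i _; rewrite mxE mulr0.
apply/idP/idP.
- case/andP => /eqP /= hx /eqP /= hb.
  have [u0|u0] := eqVneq u 0.
    by apply/orP; left; rewrite -hx u0 scale0r.
  have hb1 : bfun b x = 1.
    by apply: (mulfI u0); rewrite hb mulr1.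
  apply/orP; right; rewrite hx hb1 !eqxx /= andbT.
  apply: contraT => hd.
  have hT : Tmat a u \in unitmx by rewrite unitmxE unitfE.
  have : Tmat a u *m x = 0 by rewrite TmatE hx subrr.
  move/(congr1 (mulmx (invmx (Tmat a u)))); rewrite mulKmx // mulmx0 => x0.
  by move: hb1; rewrite x0 b0 => /eqP; rewrite eq_sym oner_eq0.
- case/orP.
    by move/eqP => [-> ->]; rewrite scale0r mul0r !eqxx.
  case/and4P => u0 _ /eqP hx /eqP hb.
  by rewrite hx hb mulr1 !eqxx.
Qed.
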